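(* For all $(t,\theta,a,\ell)$ with $t>0$, $a,\ell>0$ and $|\theta|\le at/2$ we have $$at\lesssim\tilde R\lesssim p+at,$$ $$|\partial_\theta\tilde R-1|\lesssim\frac p{at},\qquad|\partial_a\tilde R-t|\lesssim\Big\langle\frac pa\Big\rangle\ln\langle t\rangle,$$ $$|\partial_\theta^2\tilde R|\lesssim\frac p{a^2t^2},\qquad|\partial^2_{a\theta}\tilde R|\lesssim\frac p{a^2t},\qquad|\partial_a^2\tilde R|\lesssim\frac1a\Big\langle\frac pa\Big\rangle\ln\langle t\rangle,$$ where $p=p(a,\ell)$ and all derivatives are taken with respect to the variables $(\theta,a)$ of $\tilde R(t,\theta,a,\ell)=R(\theta+at,a,\ell)$.
   Context: Fix $m>0$. For $a,\ell>0$: $\kappa(a,\ell)=(1+4a^2\ell/m^2)^{-1/2}$, $p(a,\ell)=\frac{m}{2a^2\kappa(a,\ell)}$. For $\kappa\in(0,1)$, $G_\kappa(x)=\sqrt{x^2-1}-\kappa\ln(x+\sqrt{x^2-1})$ on $[1,\infty)$, $H_\kappa=G_\kappa^{-1}:[0,\infty)\to[1,\infty)$. $R(\theta,a,\ell)=pH_\kappa(|\theta|/p)-p\kappa$ (smooth on $\mathbb R\times(0,\infty)^2$) and $\tilde R(t,\theta,a,\ell)=R(\theta+at,a,\ell)$. $\langle x\rangle=(2+|x|^2)^{1/2}$. $A\lesssim B$ means $A\le CB$ with $C$ independent of $t,\theta,a,\ell$. *)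

(* Defs.v *)
From Stdlib Require Import Reals Lra ClassicalEpsilon.
From Coquelicot Require Import Coquelicot.
Open Scope R_scope.

Definition kappa (m a l : R) : R := / sqrt (1 + 4 * a ^ 2 * l / m ^ 2).

Definition pp (m a l : R) : R := m / (2 * a ^ 2 * kappa m a l).

Definition G (k x : R) : R := sqrt (x ^ 2 - 1) - k * ln (x + sqrt (x ^ 2 - 1)).

(* H_kappa = G_kappa^{-1} : [0,oo) -> [1,oo), chosen as the (unique, for
   kappa in (0,1) and y >= 0) x >= 1 with G_kappa x = y. *)
Definition H (k y : R) : R :=
  epsilon (inhabits 1) (fun x => 1 <= x /\ G k x = y).

Definition RR (m th a l : R) : R :=
  pp m a l * H (kappa m a l) (Rabs th / pp m a l) - pp m a l * kappa m a l.

Definition Rt (m t th a l : R) : R := RR m (th + a * t) a l.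

Definition jb (x : R) : R := sqrt (2 + x ^ 2).

(* Main.v *)
Require Import Defs.
From Stdlib Require Import Reals Lra Psatz ClassicalEpsilon.
From Coquelicot Require Import Coquelicot.
Open Scope R_scope.

Lemma expN x : exp (- x) = / exp x.
Proof. apply exp_Ropp. Qed.

Lemma cosh_ge1 x : 1 <= cosh x.
Proof.
  unfold cosh; rewrite expN. pose proof (exp_pos x).
  set (E := exp x) in *.
  assert (0 <= (E - 1)^2) by apply pow2_ge_0.
  apply (Rmult_le_reg_r (2 * E)). lra.
  replace ((E + / E) / 2 * (2 * E)) with (E*E + 1) by (field; lra). nra.
Qed.

Lemma cosh_sinh x : cosh x ^ 2 - sinh x ^ 2 = 1.
Proof.
  unfold cosh, sinh; rewrite expN. pose proof (exp_pos x).
  field. lra.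
Qed.

Lemma is_derive_sinh x : is_derive sinh x (cosh x).
Proof. apply is_derive_Reals, derivable_pt_lim_sinh. Qed.
Lemma is_derive_cosh x : is_derive cosh x (sinh x).
Proof. apply is_derive_Reals, derivable_pt_lim_cosh. Qed.

Lemma sinh_diff_ge a b : a <= b -> b - a <= sinh b - sinh a.
Proof.
  intros Hab. destruct (Req_dec a b) as [->|Hne]; [lra|].
  destruct (MVT_gen (fun x => sinh x - x) a b (fun x => cosh x - 1)) as [c [Hc E]].
  - intros x _. unfold sinh, cosh. auto_derive. auto. change (R_AbsRing) with R. field.
  - intros x _. apply continuity_pt_minus.
    apply derivable_continuous_pt, derivable_pt_sinh.
    apply derivable_continuous_pt, derivable_pt_id.
  - pose proof (cosh_ge1 c). nra.
Qed.

Lemma sinh_ge x : 0 <= x -> x <= sinh x.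
Proof. intros H. pose proof (sinh_diff_ge 0 x H). rewrite sinh_0 in H0. lra. Qed.

Lemma sinh_nonneg x : 0 <= x -> 0 <= sinh x.
Proof. intros H; pose proof (sinh_ge x H); lra. Qed.

Lemma fk_inj k u v : k < 1 -> sinh u - k * u = sinh v - k * v -> u = v.
Proof.
  intros Hk E.
  destruct (Rtotal_order u v) as [H|[H|H]]; auto.
  - pose proof (sinh_diff_ge u v (Rlt_le _ _ H)). nra.
  - pose proof (sinh_diff_ge v u (Rlt_le _ _ H)). nra.
Qed.

Definition U (k y : R) : R :=
  epsilon (inhabits 0) (fun u => 0 <= u /\ sinh u - k * u = y).

Lemma U_ex k y : k < 1 -> 0 < y -> exists u, 0 <= u /\ sinh u - k * u = y.
Proof.
  intros Hk Hy.
  set (M := y / (1 - k) + 1).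
  assert (HM : 0 < M). { unfold M. assert (0 < y / (1-k)) by (apply Rdiv_lt_0_compat; lra). lra. }
  destruct (IVT (fun u => sinh u - k * u - y) 0 M) as [z [Hz E]].
  - intros x. apply continuity_pt_minus; [|apply continuity_pt_const; intros ? ?; auto].
    apply continuity_pt_minus.
    apply derivable_continuous_pt, derivable_pt_sinh.
    apply continuity_pt_mult. apply continuity_pt_const; intros ? ?; auto.
    apply derivable_continuous_pt, derivable_pt_id.
  - exact HM.
  - rewrite sinh_0. lra.
  - pose proof (sinh_ge M (Rlt_le _ _ HM)).
    assert ((1 - k) * M - y = 1 - k). { unfold M. field. lra. }
    nra.
  - exists z. split; lra.
Qed.

Lemma U_spec k y : k < 1 -> 0 < y -> 0 <= U k y /\ sinh (U k y) - k * U k y = y.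
Proof.
  intros Hk Hy. unfold U. apply epsilon_spec. apply U_ex; auto.
Qed.

Lemma U_pos k y : k < 1 -> 0 < y -> 0 < U k y.
Proof.
  intros Hk Hy. destruct (U_spec k y Hk Hy) as [H1 H2].
  destruct H1 as [H1|H1]; auto. rewrite <- H1 in H2. rewrite sinh_0 in H2. lra.
Qed.

Lemma G_cosh k u : 0 <= u -> G k (cosh u) = sinh u - k * u.
Proof.
  intros Hu. unfold G.
  assert (E1 : sqrt (cosh u ^ 2 - 1) = sinh u).
  { pose proof (cosh_sinh u). replace (cosh u ^ 2 - 1) with (sinh u ^ 2) by lra.
    apply sqrt_pow2. apply sinh_nonneg; auto. }
  rewrite E1. replace (cosh u + sinh u) with (exp u).
  rewrite ln_exp. ring. unfold cosh, sinh. field.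
Qed.

Lemma H_eq k y : k < 1 -> 0 < y -> H k y = cosh (U k y).
Proof.
  intros Hk Hy. destruct (U_spec k y Hk Hy) as [H1 H2].
  assert (Hs : exists x, 1 <= x /\ G k x = y).
  { exists (cosh (U k y)). split. apply cosh_ge1. rewrite G_cosh; auto. }
  pose proof (epsilon_spec (inhabits 1) _ Hs) as [Hx1 Hx2].
  fold (H k y) in Hx1, Hx2.
  set (x := H k y) in *.
  set (r := sqrt (x ^ 2 - 1)).
  assert (Hr : 0 <= r) by apply sqrt_pos.
  assert (Hr2 : r * r = x ^ 2 - 1) by (apply sqrt_sqrt; nra).
  set (v := ln (x + r)).
  assert (Ev : exp v = x + r) by (apply exp_ln; lra).
  assert (Ev' : exp (- v) = x - r).
  { rewrite expN, Ev. field_simplify_eq; [nra|]. nra. }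
  assert (Hc : cosh v = x) by (unfold cosh; rewrite Ev, Ev'; field).
  assert (Hsv : sinh v = r) by (unfold sinh; rewrite Ev, Ev'; field).
  assert (Hv : 0 <= v). { unfold v. rewrite <- ln_1. apply ln_le; lra. }
  assert (HG : G k x = sinh v - k * v). { rewrite <- Hc. apply G_cosh; auto. }
  assert (Hvu : v = U k y). { apply (fk_inj k); auto. lra. }
  rewrite <- Hc, Hvu. reflexivity.
Qed.


Lemma lim_mult (f g : R -> R) x (a b : R) :
  is_lim f x a -> is_lim g x b -> is_lim (fun y => f y * g y) x (a * b).
Proof. intros Hf Hg. exact (is_lim_mult f g x a b Hf Hg I). Qed.

Lemma lim_div (f g : R -> R) x (a b : R) :
  is_lim f x a -> is_lim g x b -> b <> 0 -> is_lim (fun y => f y / g y) x (a / b).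
Proof.
  intros Hf Hg Hb.
  assert (Hb' : Finite b <> Finite 0) by (intro E; apply Hb; injection E; auto).
  exact (is_lim_div f g x a b Hf Hg Hb' I).
Qed.

Lemma lim_abs (f : R -> R) x (a : R) : is_lim f x a -> is_lim (fun y => Rabs (f y)) x (Rabs a).
Proof. intros Hf. exact (is_lim_Rabs f x a Hf). Qed.

Lemma lim_ev (f : R -> R) x (l e : R) : is_lim f x l -> 0 < e ->
  Rbar_locally' x (fun y => Rabs (f y - l) < e).
Proof.
  intros Hf He. apply is_lim_spec in Hf. exact (Hf (mkposreal e He)).
Qed.

Lemma ballR x e y : ball x e y <-> Rabs (y - x) < e.
Proof. reflexivity. Qed.

Lemma dq_lim (f : R -> R) (x l : R) : is_derive f x l -> is_lim (fun h => (f (x+h) - f x)/h) 0 l.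
Proof.
  intros Hd. apply is_derive_Reals in Hd. apply is_lim_spec. intros eps.
  destruct (Hd eps (cond_pos eps)) as [d Hdd].
  exists d. intros h Hh Hne. apply Hdd; auto.
  assert (Hh' : Rabs (h - 0) < d) by exact Hh. rewrite Rminus_0_r in Hh'. auto.
Qed.

Lemma lim_dq (f : R -> R) (x l : R) : is_lim (fun h => (f (x+h) - f x)/h) 0 l -> is_derive f x l.
Proof.
  intros Hl. apply is_derive_Reals. apply is_lim_spec in Hl. unfold is_lim' in Hl. intros eps Heps.
  destruct (Hl (mkposreal eps Heps)) as [d Hdd].
  exists d. intros h Hne Hh. apply Hdd; auto.
  change (Rabs (h - 0) < d). rewrite Rminus_0_r. auto.
Qed.

Lemma lim_shift (f : R -> R) (x : R) : continuous f x -> is_lim (fun h => f (x + h)) 0 (f x).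
Proof.
  intros Hc.
  assert (H1 : is_lim f x (f x)).
  { apply is_lim_continuity. apply continuity_pt_filterlim. exact Hc. }
  assert (H2 : is_lim (fun h => f (1 * h + x)) 0 (f x)).
  { apply is_lim_comp_lin; [|lra]. simpl. replace (1 * 0 + x) with x by ring. exact H1. }
  eapply is_lim_ext; [|exact H2]. intros h; simpl. f_equal; ring.
Qed.

Lemma lim_shift_d (f : R -> R) (x l : R) : is_derive f x l -> is_lim (fun h => f (x + h)) 0 (f x).
Proof. intros Hd. assert (Hex : ex_derive f x) by (exists l; exact Hd). apply lim_shift. exact (ex_derive_continuous f x Hex). Qed.

Lemma loc_shift (P : R -> Prop) x : locally x P -> Rbar_locally' 0 (fun h => P (x + h)).
Proof.
  intros [e He]. exists e. intros h Hh _. apply He. change (Rabs (x + h - x) < e).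
  change (Rabs (h - 0) < e) in Hh.
  replace (x + h - x) with (h - 0) by ring. exact Hh.
Qed.

Lemma ev_ne0 : Rbar_locally' (Finite 0) (fun h => h <> 0).
Proof. exists (mkposreal 1 Rlt_0_1). intros h _ Hne. exact Hne. Qed.

Section Curve.
Variables (k y : R -> R) (x k' y' : R).
Hypotheses (Hk : is_derive k x k') (Hy : is_derive y x y') (Hk1 : k x < 1) (Hy0 : 0 < y x).

Let g z := U (k z) (y z).
Let g0 := g x.

Let S v := match Req_EM_T v g0 with left _ => cosh g0 | right _ => (sinh v - sinh g0) / (v - g0) end.

Lemma S_ge1 v : 1 <= S v.
Proof.
  unfold S. destruct (Req_EM_T v g0) as [E|E]. apply cosh_ge1.
  destruct (Rle_lt_dec v g0) as [H|H].
  - assert (v < g0) by lra. pose proof (sinh_diff_ge v g0 H).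
    replace ((sinh v - sinh g0) / (v - g0)) with ((sinh g0 - sinh v) / (g0 - v)) by (field; lra).
    apply Rle_div_r; lra.
  - pose proof (sinh_diff_ge g0 v (Rlt_le _ _ H)). apply Rle_div_r; lra.
Qed.

Lemma S_eq v : (v - g0) * S v = sinh v - sinh g0.
Proof.
  unfold S. destruct (Req_EM_T v g0) as [E|E]. subst. ring. field. lra.
Qed.

Lemma S_cont : continuous S g0.
Proof.
  apply filterlim_locally. intros eps.
  pose proof (derivable_pt_lim_sinh g0 eps (cond_pos eps)) as [d Hd].
  exists d. intros v0 Hv0.
  cut (forall v : R, Rabs (v - g0) < d -> Rabs (S v - S g0) < eps).
  { intros Hc; apply Hc; exact Hv0. }
  intros v Hv.
  assert (S g0 = cosh g0). { unfold S. destruct (Req_EM_T g0 g0); [auto|contradiction]. }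
  rewrite H. unfold S. destruct (Req_EM_T v g0) as [E|E].
  - rewrite Rminus_eq_0, Rabs_R0. apply cond_pos.
  - specialize (Hd (v - g0)). replace (g0 + (v - g0)) with v in Hd by ring.
    apply Hd; auto. lra.
Qed.

Lemma curve_ev : Rbar_locally' 0 (fun h => k (x + h) < (1 + k x) / 2 /\ 0 < y (x + h)).
Proof.
  pose proof (lim_ev _ _ _ ((1 - k x)/2) (lim_shift_d k x k' Hk)) as H1.
  pose proof (lim_ev _ _ _ (y x) (lim_shift_d y x y' Hy)) as H2.
  assert (0 < (1 - k x)/2) by lra.
  specialize (H1 H). specialize (H2 Hy0).
  eapply filter_imp; [|exact (filter_and _ _ H1 H2)].
  intros h [A1 A2]. apply Rabs_def2 in A1. apply Rabs_def2 in A2. split; lra.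
Qed.

Lemma curve_id h : k (x + h) < 1 -> 0 < y (x + h) ->
  (g (x + h) - g0) * (S (g (x + h)) - k (x + h)) = (y (x + h) - y x) + g0 * (k (x + h) - k x).
Proof.
  intros A1 A2.
  destruct (U_spec _ _ A1 A2) as [_ E1]. destruct (U_spec _ _ Hk1 Hy0) as [_ E0].
  fold (g (x + h)) in E1. fold g0 in E0. unfold g0, g in *.
  rewrite Rmult_minus_distr_l, S_eq.
  set (U1 := U (k (x + h)) (y (x + h))) in *. set (U0 := U (k x) (y x)) in *.
  set (k1 := k (x + h)) in *. set (y1 := y (x + h)) in *.
  replace y1 with (sinh U1 - k1 * U1) by (rewrite <- E1; reflexivity).
  replace (y x) with (sinh U0 - k x * U0) by (rewrite <- E0; reflexivity). unfold g0. ring.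
Qed.

Lemma g_cont : is_lim (fun h => g (x + h)) 0 g0.
Proof.
  set (c := 2 / (1 - k x)).
  set (B := fun h => Rabs ((y (x + h) - y x) + g0 * (k (x + h) - k x)) * c).
  assert (HB : is_lim B 0 (Rabs ((y x - y x) + g0 * (k x - k x)) * c)).
  { apply lim_mult; [|apply is_lim_const]. apply lim_abs. apply is_lim_plus'.
    apply is_lim_minus'. apply (lim_shift_d y x y' Hy). apply is_lim_const.
    apply lim_mult. apply is_lim_const. apply is_lim_minus'. apply (lim_shift_d k x k' Hk). apply is_lim_const. }
  replace (Rabs ((y x - y x) + g0 * (k x - k x)) * c) with 0 in HB
    by (replace ((y x - y x) + g0 * (k x - k x)) with 0 by ring; rewrite Rabs_R0; ring).
  apply (is_lim_le_le_loc (fun h => g0 - B h) (fun h => g0 + B h)).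
  - eapply filter_imp; [|exact curve_ev]. intros h [A1 A2].
    pose proof (curve_id h ltac:(lra) A2) as E.
    pose proof (S_ge1 (g (x + h))) as HS.
    set (dg := g (x + h) - g0) in *.
    set (N := (y (x + h) - y x) + g0 * (k (x + h) - k x)) in *.
    assert (Hden : (1 - k x) / 2 <= S (g (x + h)) - k (x + h)) by lra.
    assert (Hc : 0 < c) by (unfold c; apply Rdiv_lt_0_compat; lra).
    assert (Habs : Rabs dg * ((1 - k x) / 2) <= Rabs N).
    { rewrite <- E, Rabs_mult. apply Rmult_le_compat_l. apply Rabs_pos.
      rewrite Rabs_right; lra. }
    assert (Rabs dg <= B h).
    { unfold B. fold N. unfold c. apply (Rmult_le_reg_r ((1 - k x)/2)). lra.
      replace (Rabs N * (2 / (1 - k x)) * ((1 - k x) / 2)) with (Rabs N) by (field; lra). lra. }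
    assert (dg <= Rabs dg) by apply RRle_abs. assert (- dg <= Rabs dg) by (rewrite <- Rabs_Ropp; apply RRle_abs). unfold dg in *. lra.
  - replace (Finite g0) with (Finite (g0 - 0)) by (f_equal; ring).
    apply is_lim_minus'. apply is_lim_const. exact HB.
  - replace (Finite g0) with (Finite (g0 + 0)) by (f_equal; ring).
    apply is_lim_plus'. apply is_lim_const. exact HB.
Qed.

Lemma U_curve_derive :
  is_derive (fun z => U (k z) (y z)) x ((k' * U (k x) (y x) + y') / (cosh (U (k x) (y x)) - k x)).
Proof.
  apply lim_dq. fold (g x). fold g0.
  replace (k' * g0 + y') with (y' + g0 * k') by ring.
  assert (HS : is_lim (fun h => S (g (x + h))) 0 (S g0)).
  { apply is_lim_comp_continuous. apply g_cont. apply S_cont. }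
  assert (ES : S g0 = cosh g0). { unfold S. destruct (Req_EM_T g0 g0); [auto|contradiction]. }
  rewrite ES in HS.
  assert (Hlim : is_lim (fun h => ((y (x + h) - y x) / h + g0 * ((k (x + h) - k x) / h)) / (S (g (x + h)) - k (x + h))) 0
     ((y' + g0 * k') / (cosh g0 - k x))).
  { apply lim_div.
    - apply is_lim_plus'. apply dq_lim; auto. apply lim_mult. apply is_lim_const. apply dq_lim; auto.
    - apply is_lim_minus'. exact HS. apply (lim_shift_d k x k' Hk).
    - pose proof (cosh_ge1 g0). lra. }
  eapply is_lim_ext_loc; [|exact Hlim].
  eapply filter_imp; [|exact (filter_and _ _ curve_ev ev_ne0)]. intros h [[A1 A2] Hh].
  pose proof (curve_id h ltac:(lra) A2) as E.
  pose proof (S_ge1 (g (x + h))) as HS1.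
  unfold g0 in *. simpl.
  apply (Rmult_eq_reg_r ((S (g (x + h)) - k (x + h)) * h)); [|apply Rmult_integral_contrapositive; split; lra].
  field_simplify; [|lra|split; lra].
  replace (y (x + h) - y x + g x * k (x + h) - g x * k x) with (y (x + h) - y x + g x * (k (x + h) - k x)) by ring. rewrite <- E. unfold g. ring.
Qed.
End Curve.


Definition Kf m l a := kappa m a l.
Definition Pf m l a := pp m a l.

Section D.
Variables (m l : R).
Hypotheses (hm : 0 < m) (hl : 0 < l).

Lemma K_bounds a : 0 < a -> 0 < Kf m l a < 1.
Proof.
  intros ha. unfold Kf, kappa.
  assert (H1 : 0 < 4 * a ^ 2 * l / m ^ 2).
  { apply Rdiv_lt_0_compat; [|apply pow_lt; auto]. apply Rmult_lt_0_compat; [|auto]. 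
    apply Rmult_lt_0_compat; [lra|apply pow_lt; auto]. }
  assert (H2 : 1 < sqrt (1 + 4 * a ^ 2 * l / m ^ 2)).
  { assert (H3 : sqrt 1 < sqrt (1 + 4 * a ^ 2 * l / m ^ 2)) by (apply sqrt_lt_1; lra).
    rewrite sqrt_1 in H3. exact H3. }
  split. apply Rinv_0_lt_compat; lra.
  assert (H3 : / sqrt (1 + 4 * a ^ 2 * l / m ^ 2) < / 1) by (apply Rinv_lt_contravar; lra).
  rewrite Rinv_1 in H3. exact H3.
Qed.

Lemma K_sq a : 0 < a -> / (Kf m l a) ^ 2 = 1 + 4 * a ^ 2 * l / m ^ 2.
Proof.
  intros ha. unfold Kf, kappa. rewrite pow_inv, Rinv_inv.
  rewrite <- Rsqr_pow2, Rsqr_sqrt; auto.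
  assert (0 <= 4 * a ^ 2 * l / m ^ 2).
  { apply Rmult_le_pos. apply Rmult_le_pos. apply Rmult_le_pos; try lra. apply pow2_ge_0. lra.
    left; apply Rinv_0_lt_compat, pow_lt; auto. }
  lra.
Qed.

Lemma dK a : 0 < a -> is_derive (Kf m l) a (- (Kf m l a) * (1 - Kf m l a ^ 2) / a).
Proof.
  intros ha. pose proof (K_sq a ha) as HS. pose proof (K_bounds a ha) as HK.
  unfold Kf in *. unfold kappa in *.
  set (X := 1 + 4 * a ^ 2 * l / m ^ 2) in *.
  assert (HX : 1 < X).
  { unfold X. assert (0 < 4 * a ^ 2 * l / m ^ 2); [|lra].
    apply Rdiv_lt_0_compat; [|apply pow_lt; auto]. apply Rmult_lt_0_compat; [|auto]. 
    apply Rmult_lt_0_compat; [lra|apply pow_lt; auto]. }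
  assert (Hm2 : m * (m * 1) <> 0) by (apply Rmult_integral_contrapositive; split; lra).
  assert (EX : 1 + 4 * (a * (a * 1)) * l * / (m * (m * 1)) = X) by (unfold X; field; lra).
  assert (EL : 4 * (1 * ((1 + 1) * (a * 1))) * l * / (m * (m * 1)) = (X - 1) * 2 / a)
    by (unfold X; field; split; lra).
  assert (HS0 : 0 < sqrt X) by (apply sqrt_lt_R0; lra).
  assert (HSS : sqrt X * sqrt X = X) by (apply sqrt_sqrt; lra).
  auto_derive.
  - rewrite EX. repeat split; lra.
  - rewrite EX, EL. set (S := sqrt X) in *. rewrite <- HSS. field. lra.
Qed.
Lemma DK a : 0 < a -> Derive (fun x => Kf m l x) a = - (Kf m l a) * (1 - Kf m l a ^ 2) / a.
Proof. intros ha. apply is_derive_unique. apply dK; auto. Qed.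

Lemma exK a : 0 < a -> ex_derive (fun x => Kf m l x) a.
Proof. intros ha. eexists. apply dK; auto. Qed.

Lemma P_pos a : 0 < a -> 0 < Pf m l a.
Proof.
  intros ha. pose proof (K_bounds a ha). unfold Pf, pp. fold (Kf m l a).
  apply Rdiv_lt_0_compat; auto. apply Rmult_lt_0_compat; [|lra].
  apply Rmult_lt_0_compat; [lra|apply pow_lt; auto].
Qed.

Lemma P_eq a : Pf m l a = m / (2 * a ^ 2 * Kf m l a).
Proof. reflexivity. Qed.

Lemma dP a : 0 < a -> is_derive (Pf m l) a (- (Pf m l a / a) * (1 + Kf m l a ^ 2)).
Proof.
  intros ha. pose proof (K_bounds a ha).
  change (is_derive (fun x => m / (2 * x ^ 2 * Kf m l x)) a (- (Pf m l a / a) * (1 + Kf m l a ^ 2))).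
  auto_derive.
  - split. apply exK; auto. split; auto.
    apply Rmult_integral_contrapositive; split; [|lra].
    apply Rmult_integral_contrapositive; split; [lra|]. apply Rmult_integral_contrapositive; split; lra.
  - rewrite DK by auto. rewrite P_eq. field. split; lra.
Qed.

Lemma DP a : 0 < a -> Derive (fun x => Pf m l x) a = - (Pf m l a / a) * (1 + Kf m l a ^ 2).
Proof. intros ha. apply is_derive_unique. apply dP; auto. Qed.

Lemma exP a : 0 < a -> ex_derive (fun x => Pf m l x) a.
Proof. intros ha. eexists. apply dP; auto. Qed.

End D.


Definition Ys m t l th a := (th + a * t) / Pf m l a.
Definition Ug m t l th a := U (Kf m l a) (Ys m t l th a).
Definition UgT m t l a th := Ug m t l th a.

Definition Dd k u := cosh u - k.
Definition Bf k u := 3 * k + k ^ 3 - (1 - k ^ 4) / (cosh u - k) - 2 * k * u * sinh u / (cosh u - k).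
Definition Buf k u := (1 - k ^ 4) * sinh u / (cosh u - k) ^ 2
   - 2 * k * (sinh u + u * cosh u) / (cosh u - k) + 2 * k * u * sinh u ^ 2 / (cosh u - k) ^ 2.
Definition Bkf k u := 3 + 3 * k ^ 2 + 4 * k ^ 3 / (cosh u - k) - (1 - k ^ 4) / (cosh u - k) ^ 2
   - 2 * u * sinh u / (cosh u - k) - 2 * k * u * sinh u / (cosh u - k) ^ 2.
Definition kpf k a := - k * (1 - k ^ 2) / a.
Definition ypf t p y k a := t / p + y / a * (1 + k ^ 2).
Definition Ftt k u p := (1 - k * cosh u) / (p * (cosh u - k) ^ 3).
Definition Fta k u p y t a := (1 - k * cosh u) / (cosh u - k) ^ 3 * (ypf t p y k a + u * kpf k a)
   + sinh u * kpf k a / (cosh u - k) ^ 2.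
Definition Faa k u p y t a := t * Fta k u p y t a - p / a ^ 2 * (2 + k ^ 2) * Bf k u
   + p / a * (Buf k u * ((ypf t p y k a + u * kpf k a) / (cosh u - k)) + Bkf k u * kpf k a).

Definition Rg m t l th a := Pf m l a * (cosh (Ug m t l th a) - Kf m l a).
Definition F1 m t l th a := sinh (Ug m t l th a) / (cosh (Ug m t l th a) - Kf m l a).
Definition F2 m t l th a := t * F1 m t l th a + Pf m l a / a * Bf (Kf m l a) (Ug m t l th a).

Ltac splits := repeat match goal with |- _ /\ _ => split | |- True => exact I end.

Lemma DE_pos E k : 0 < E -> 0 < (E + / E) / 2 - k -> 0 < E * E + 1 - k * (E * 2).
Proof.
  intros HE HD. replace (E * E + 1 - k * (E * 2)) with (2 * E * ((E + / E) / 2 - k)) by (field; lra).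
  apply Rmult_lt_0_compat; lra.
Qed.

Section E.
Variables (m t l : R).
Hypotheses (hm : 0 < m) (hl : 0 < l) (ht : 0 < t).

Lemma D_pos k u : k < 1 -> 0 < cosh u - k.
Proof. intros. pose proof (cosh_ge1 u). lra. Qed.

Lemma Ys_pos th a : 0 < a -> 0 < th + a * t -> 0 < Ys m t l th a.
Proof. intros ha hs. unfold Ys. apply Rdiv_lt_0_compat; auto. apply P_pos; auto. Qed.

Lemma dYs th a : 0 < a -> is_derive (fun x => Ys m t l th x) a
   (ypf t (Pf m l a) (Ys m t l th a) (Kf m l a) a).
Proof.
  intros ha. pose proof (P_pos m l hm hl a ha).
  unfold Ys, ypf. auto_derive.
  - split. apply exP; auto. split; auto. lra.
  - rewrite DP by auto. field. split; lra.
Qed.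

Lemma dUgT th a : 0 < a -> 0 < th + a * t ->
  is_derive (fun x => UgT m t l a x) th (/ (Pf m l a * (cosh (Ug m t l th a) - Kf m l a))).
Proof.
  intros ha hs. pose proof (P_pos m l hm hl a ha). pose proof (K_bounds m l hm hl a ha).
  pose proof (Ys_pos th a ha hs).
  assert (Hy : is_derive (fun z => Ys m t l z a) th (/ Pf m l a)).
  { unfold Ys. auto_derive. lra. field. lra. }
  pose proof (U_curve_derive (fun _ => Kf m l a) (fun z => Ys m t l z a) th 0 (/ Pf m l a)
      (is_derive_const _ _) Hy ltac:(lra) H1) as HU.
  cbv beta in HU. unfold UgT, Ug.
  pose proof (D_pos (Kf m l a) (U (Kf m l a) (Ys m t l th a)) ltac:(lra)).
  replace (/ (Pf m l a * (cosh (U (Kf m l a) (Ys m t l th a)) - Kf m l a))) with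
    ((0 * U (Kf m l a) (Ys m t l th a) + / Pf m l a) / (cosh (U (Kf m l a) (Ys m t l th a)) - Kf m l a))
    by (field; lra).
  exact HU.
Qed.

Lemma dUg th a : 0 < a -> 0 < th + a * t ->
  is_derive (fun x => Ug m t l th x) a
   ((ypf t (Pf m l a) (Ys m t l th a) (Kf m l a) a + Ug m t l th a * kpf (Kf m l a) a)
     / (cosh (Ug m t l th a) - Kf m l a)).
Proof.
  intros ha hs. pose proof (K_bounds m l hm hl a ha).
  pose proof (Ys_pos th a ha hs).
  pose proof (U_curve_derive (Kf m l) (fun z => Ys m t l th z) a _ _
      (dK m l hm hl a ha) (dYs th a ha) ltac:(lra) H0) as HU.
  cbv beta in HU. unfold Ug. unfold kpf.
  replace (ypf t (Pf m l a) (Ys m t l th a) (Kf m l a) a + U (Kf m l a) (Ys m t l th a) * (- Kf m l a * (1 - Kf m l a ^ 2) / a))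
   with (- Kf m l a * (1 - Kf m l a ^ 2) / a * U (Kf m l a) (Ys m t l th a) + ypf t (Pf m l a) (Ys m t l th a) (Kf m l a) a) by ring.
  exact HU.
Qed.

Lemma DUgT th a : 0 < a -> 0 < th + a * t ->
  Derive (fun x => UgT m t l a x) th = / (Pf m l a * (cosh (Ug m t l th a) - Kf m l a)).
Proof. intros. apply is_derive_unique. apply dUgT; auto. Qed.
Lemma exUgT th a : 0 < a -> 0 < th + a * t -> ex_derive (fun x => UgT m t l a x) th.
Proof. intros. eexists. apply dUgT; auto. Qed.
Lemma DUg th a : 0 < a -> 0 < th + a * t ->
  Derive (fun x => Ug m t l th x) a =
   ((ypf t (Pf m l a) (Ys m t l th a) (Kf m l a) a + Ug m t l th a * kpf (Kf m l a) a)
     / (cosh (Ug m t l th a) - Kf m l a)).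
Proof. intros. apply is_derive_unique. apply dUg; auto. Qed.
Lemma exUg th a : 0 < a -> 0 < th + a * t -> ex_derive (fun x => Ug m t l th x) a.
Proof. intros. eexists. apply dUg; auto. Qed.

Ltac solve_ex := repeat match goal with
 | |- ex_derive (fun x => Ug _ _ _ _ x) _ => apply exUg; auto
 | |- ex_derive (fun x => Kf _ _ x) _ => apply exK; auto
 | |- ex_derive (fun x => Pf _ _ x) _ => apply exP; auto
 end.

Lemma Ys_eq th a : 0 < a -> 0 < th + a * t ->
  Ys m t l th a = sinh (Ug m t l th a) - Kf m l a * Ug m t l th a.
Proof.
  intros ha hs. pose proof (K_bounds m l hm hl a ha). pose proof (Ys_pos th a ha hs).
  destruct (U_spec (Kf m l a) (Ys m t l th a)) as [_ E]; try lra.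
  unfold Ug. rewrite E. reflexivity.
Qed.

Lemma dRth th a : 0 < a -> 0 < th + a * t ->
  is_derive (fun x => Rg m t l x a) th (F1 m t l th a).
Proof.
  intros ha hs. pose proof (P_pos m l hm hl a ha). pose proof (K_bounds m l hm hl a ha).
  pose proof (D_pos (Kf m l a) (Ug m t l th a) ltac:(lra)).
  change (is_derive (fun x => Pf m l a * (cosh (UgT m t l a x) - Kf m l a)) th (F1 m t l th a)).
  auto_derive.
  - exact (exUgT th a ha hs).
  - rewrite DUgT by auto. unfold F1, UgT. field. split; lra.
Qed.

Lemma dRa th a : 0 < a -> 0 < th + a * t ->
  is_derive (fun x => Rg m t l th x) a (F2 m t l th a).
Proof.
  intros ha hs. pose proof (P_pos m l hm hl a ha). pose proof (K_bounds m l hm hl a ha).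
  pose proof (D_pos (Kf m l a) (Ug m t l th a) ltac:(lra)).
  unfold Rg. auto_derive.
  - splits; auto. apply exP; auto. apply exUg; auto. apply exK; auto.
  - rewrite DP, DK, DUg by auto. unfold F2, F1, Bf, ypf, kpf.
    rewrite Ys_eq by auto.
    set (u := Ug m t l th a) in *. set (k := Kf m l a) in *. set (p := Pf m l a) in *.
    unfold cosh, sinh in *. rewrite (expN u) in *. pose proof (exp_pos u). set (E := exp u) in *.
    pose proof (DE_pos E k H2 H1). field. splits; lra.
Qed.

Ltac expify u :=
  unfold cosh, sinh in *; rewrite (expN u) in *;
  let HE := fresh "HE" in pose proof (exp_pos u) as HE;
  let E := fresh "E" in set (E := exp u) in *.

Lemma dF1th th a : 0 < a -> 0 < th + a * t ->
  is_derive (fun x => F1 m t l x a) th (Ftt (Kf m l a) (Ug m t l th a) (Pf m l a)).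
Proof.
  intros ha hs. pose proof (P_pos m l hm hl a ha). pose proof (K_bounds m l hm hl a ha).
  pose proof (D_pos (Kf m l a) (Ug m t l th a) ltac:(lra)).
  change (is_derive (fun x => sinh (UgT m t l a x) / (cosh (UgT m t l a x) - Kf m l a)) th
     (Ftt (Kf m l a) (Ug m t l th a) (Pf m l a))).
  auto_derive.
  - splits; try exact (exUgT th a ha hs). unfold UgT; lra.
  - rewrite DUgT by auto. unfold Ftt, UgT.
    set (u := Ug m t l th a) in *. set (k := Kf m l a) in *. set (p := Pf m l a) in *.
    expify u. pose proof (DE_pos E k HE H1). field. splits; lra.
Qed.

Lemma dF1a th a : 0 < a -> 0 < th + a * t ->
  is_derive (fun x => F1 m t l th x) a
    (Fta (Kf m l a) (Ug m t l th a) (Pf m l a) (Ys m t l th a) t a).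
Proof.
  intros ha hs. pose proof (P_pos m l hm hl a ha). pose proof (K_bounds m l hm hl a ha).
  pose proof (D_pos (Kf m l a) (Ug m t l th a) ltac:(lra)).
  unfold F1. auto_derive.
  - splits; solve_ex; lra.
  - rewrite DK, DUg by auto. unfold Fta, ypf, kpf.
    set (y := Ys m t l th a) in *.
    set (u := Ug m t l th a) in *. set (k := Kf m l a) in *. set (p := Pf m l a) in *.
    expify u. pose proof (DE_pos E k HE H1). field. splits; lra.
Qed.

Lemma DF1a th a : 0 < a -> 0 < th + a * t ->
  Derive (fun x => F1 m t l th x) a = Fta (Kf m l a) (Ug m t l th a) (Pf m l a) (Ys m t l th a) t a.
Proof. intros. apply is_derive_unique. apply dF1a; auto. Qed.

Definition Gb th x := Bf (Kf m l x) (Ug m t l th x).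

Lemma dGb th a : 0 < a -> 0 < th + a * t ->
  is_derive (fun x => Gb th x) a
   (Buf (Kf m l a) (Ug m t l th a) * Derive (fun x => Ug m t l th x) a
    + Bkf (Kf m l a) (Ug m t l th a) * Derive (fun x => Kf m l x) a).
Proof.
  intros ha hs. pose proof (K_bounds m l hm hl a ha).
  pose proof (D_pos (Kf m l a) (Ug m t l th a) ltac:(lra)).
  unfold Gb, Bf. auto_derive.
  - splits; solve_ex; lra.
  - unfold Buf, Bkf.
    set (dU := Derive (fun x => Ug m t l th x) a). set (dk := Derive (fun x => Kf m l x) a).
    set (u := Ug m t l th a) in *. set (k := Kf m l a) in *.
    set (c := cosh u) in *. set (s := sinh u) in *.
    field. lra.
Qed.

Lemma DGb th a : 0 < a -> 0 < th + a * t ->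
  Derive (fun x => Gb th x) a =
   (Buf (Kf m l a) (Ug m t l th a) * Derive (fun x => Ug m t l th x) a
    + Bkf (Kf m l a) (Ug m t l th a) * Derive (fun x => Kf m l x) a).
Proof. intros. apply is_derive_unique. apply dGb; auto. Qed.

Lemma dF2a th a : 0 < a -> 0 < th + a * t ->
  is_derive (fun x => F2 m t l th x) a
    (Faa (Kf m l a) (Ug m t l th a) (Pf m l a) (Ys m t l th a) t a).
Proof.
  intros ha hs. pose proof (P_pos m l hm hl a ha). pose proof (K_bounds m l hm hl a ha).
  pose proof (D_pos (Kf m l a) (Ug m t l th a) ltac:(lra)).
  change (is_derive (fun x => t * F1 m t l th x + Pf m l x / x * Gb th x) a
    (Faa (Kf m l a) (Ug m t l th a) (Pf m l a) (Ys m t l th a) t a)).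
  auto_derive.
  - splits; solve_ex; try lra.
    eexists; apply dF1a; auto. eexists; apply dGb; auto.
  - rewrite DF1a, DP by auto.
    rewrite DGb by auto.
    rewrite DUg, DK by auto. unfold Faa, Gb, kpf.
    set (F := Fta (Kf m l a) (Ug m t l th a) (Pf m l a) (Ys m t l th a) t a).
    set (B1 := Buf (Kf m l a) (Ug m t l th a)). set (B2 := Bkf (Kf m l a) (Ug m t l th a)).
    set (B0 := Bf (Kf m l a) (Ug m t l th a)).
    set (Y := ypf t (Pf m l a) (Ys m t l th a) (Kf m l a) a).
    set (u := Ug m t l th a) in *. set (k := Kf m l a) in *. set (p := Pf m l a) in *.
    set (c := cosh u) in *.
    field. lra.
Qed.

End E.


Lemma le_div (x b d : R) : 0 < d -> x <= b * d -> x / d <= b.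
Proof.
  intros Hd H. apply (Rmult_le_reg_r d); auto. unfold Rdiv. rewrite Rmult_assoc, Rinv_l; lra.
Qed.

Lemma abs_div_le (x b d : R) : 0 < d -> Rabs x <= b * d -> Rabs (x / d) <= b.
Proof.
  intros Hd H. unfold Rdiv. rewrite Rabs_mult, Rabs_inv, (Rabs_right d) by lra.
  apply le_div; auto.
Qed.

Lemma abs_le (x b : R) : - b <= x <= b -> Rabs x <= b.
Proof. intros. apply Rabs_le; lra. Qed.

Lemma abs_tri3 a b c : Rabs (a + b + c) <= Rabs a + Rabs b + Rabs c.
Proof.
  eapply Rle_trans. apply Rabs_triang. pose proof (Rabs_triang a b). lra.
Qed.

Definition kpg k a := - k * (1 - k ^ 2) / a.
Definition ypg t p y k a := t / p + y / a * (1 + k ^ 2).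
Definition Bg k u c s := 3 * k + k ^ 3 - (1 - k ^ 4) / (c - k) - 2 * k * u * s / (c - k).
Definition Bug k u c s := (1 - k ^ 4) * s / (c - k) ^ 2
   - 2 * k * (s + u * c) / (c - k) + 2 * k * u * s ^ 2 / (c - k) ^ 2.
Definition Bkg k u c s := 3 + 3 * k ^ 2 + 4 * k ^ 3 / (c - k) - (1 - k ^ 4) / (c - k) ^ 2
   - 2 * u * s / (c - k) - 2 * k * u * s / (c - k) ^ 2.
Definition Fttg k c p := (1 - k * c) / (p * (c - k) ^ 3).
Definition Ftag k u c s p y t a := (1 - k * c) / (c - k) ^ 3 * (ypg t p y k a + u * kpg k a)
   + s * kpg k a / (c - k) ^ 2.
Definition Faag k u c s p y t a := t * Ftag k u c s p y t a - p / a ^ 2 * (2 + k ^ 2) * Bg k u c s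
   + p / a * (Bug k u c s * ((ypg t p y k a + u * kpg k a) / (c - k)) + Bkg k u c s * kpg k a).

Lemma abs1_mul x Y B : Rabs x <= 1 -> 0 <= Y -> Y <= B -> Rabs (x * Y) <= B.
Proof.
  intros H1 H2 H3. rewrite Rabs_mult, (Rabs_right Y) by lra.
  apply Rle_trans with (1 * Y). apply Rmult_le_compat_r; lra. lra.
Qed.

Lemma Rdiv_le_0_compat x d : 0 <= x -> 0 < d -> 0 <= x / d.
Proof. intros. unfold Rdiv. apply Rmult_le_pos; [|left; apply Rinv_0_lt_compat]; lra. Qed.

Lemma abs_form Z w B K : 0 <= Z -> 0 <= w -> 0 <= K ->
  Rabs (Z * (w * B) * K) = Z * K * (w * Rabs B).
Proof.
  intros. rewrite !Rabs_mult, (Rabs_right Z), (Rabs_right w), (Rabs_right K) by lra. ring.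
Qed.

Section G.
Variables k u c s : R.
Hypotheses (hk0 : 0 < k) (hk1 : k < 1) (hu : 0 < u) (hc1 : 1 <= c) (hcs : c * c - s * s = 1)
  (hsu : u <= s) (hcs1 : c - s <= 1) (hcs0 : 0 < c - s) (hcs2 : 1 - u <= c - s)
  (htanh : s <= u * c) (h5 : u * s <= (u + 2) * (c - 1)).

Let Dv := c - k.
Let y := s - k * u.

Lemma Dv_pos : 0 < Dv. Proof. unfold Dv; lra. Qed.
Lemma y_pos : 0 < y. Proof. unfold y. nra. Qed.
Lemma P1 : Rabs (1 - k * c) <= Dv.
Proof. unfold Dv. apply abs_le. split; nra. Qed.
Lemma P2a : y <= Dv.
Proof.
  unfold y, Dv. destruct (Rle_lt_dec 1 u). nra. nra.
Qed.
Lemma P2b : y <= u * Dv. Proof. unfold y, Dv. nra. Qed.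
Lemma P3a : 1 - k <= Dv. Proof. unfold Dv. lra. Qed.
Lemma P3b : (1 - k) * c <= Dv. Proof. unfold Dv. nra. Qed.
Lemma P3c : c - 1 <= Dv. Proof. unfold Dv. lra. Qed.
Lemma s_le_c : s <= c. Proof. lra. Qed.
Lemma P3d : s * (1 - k) <= Dv. Proof. pose proof P3b. nra. Qed.
Lemma P3e : u * (1 - k) <= Dv. Proof. pose proof P3b. nra. Qed.
Lemma P4 : u * s <= (u + 2) * Dv. Proof. pose proof P3c. nra. Qed.
Lemma s_nonneg : 0 <= s. Proof. lra. Qed.

Let iD := / Dv.
Lemma iD_pos : 0 < iD. Proof. unfold iD. apply Rinv_0_lt_compat, Dv_pos. Qed.
Lemma Di : Dv * iD = 1. Proof. unfold iD. apply Rinv_r. pose proof Dv_pos. lra. Qed.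

Lemma Q1 : (1 - k) * iD <= 1. Proof. pose proof P3a; pose proof iD_pos; pose proof Di. nra. Qed.
Lemma Q2 : y * iD <= 1. Proof. pose proof P2a; pose proof iD_pos; pose proof Di. nra. Qed.
Lemma Q3 : y * iD <= u. Proof. pose proof P2b; pose proof iD_pos; pose proof Di. nra. Qed.
Lemma Q4 : u * (1 - k) * iD <= 1. Proof. pose proof P3e; pose proof iD_pos; pose proof Di. nra. Qed.
Lemma Q5 : u * (1 - k) * iD <= u. Proof. pose proof Q1; nra. Qed.
Lemma Q6 : s * (1 - k) * iD <= 1. Proof. pose proof P3d; pose proof iD_pos; pose proof Di. nra. Qed.
Lemma Q7 : u * s * iD <= u + 2. Proof. pose proof P4; pose proof iD_pos; pose proof Di. nra. Qed.
Lemma Q8 : Rabs (1 - k * c) * iD <= 1.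
Proof. pose proof P1; pose proof iD_pos; pose proof Di. pose proof (Rabs_pos (1 - k*c)). nra. Qed.
Lemma Q9 : 0 <= y * iD. Proof. pose proof y_pos; pose proof iD_pos. nra. Qed.
Lemma Q10 : 0 <= u * (1 - k) * iD. Proof. pose proof iD_pos. apply Rmult_le_pos; nra. Qed.

Lemma Bug_eq : Bug k u c s = (1 - k ^ 4) * s * iD ^ 2 - 2 * k * (s + u * c) * iD + 2 * k * u * s ^ 2 * iD ^ 2.
Proof. unfold Bug, iD, Dv. pose proof Dv_pos. unfold Dv in H. field. lra. Qed.

Lemma Bkg_eq : Bkg k u c s = 3 + 3 * k ^ 2 + 4 * k ^ 3 * iD - (1 - k ^ 4) * iD ^ 2
   - 2 * u * s * iD - 2 * k * u * s * iD ^ 2.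
Proof. unfold Bkg, iD, Dv. pose proof Dv_pos. unfold Dv in H. field. lra. Qed.

Lemma Bg_eq : Bg k u c s = 3 * k + k ^ 3 - (1 - k ^ 4) * iD - 2 * k * u * s * iD.
Proof. unfold Bg, iD, Dv. pose proof Dv_pos. unfold Dv in H. field. lra. Qed.

Lemma kpow n : 0 <= k ^ n <= 1.
Proof. induction n; simpl. lra. split; nra. Qed.
Lemma k4 : 1 - k ^ 4 <= 4 * (1 - k).
Proof.
  replace (1 - k ^ 4) with ((1 - k) * (1 + k + k ^ 2 + k ^ 3)) by ring.
  pose proof (kpow 2). pose proof (kpow 3).
  rewrite (Rmult_comm 4). apply Rmult_le_compat_l; lra.
Qed.
Lemma k4p : 0 <= 1 - k ^ 4.
Proof. pose proof (kpow 4). lra. Qed.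

Lemma u2_le : u * u * iD <= u + 2.
Proof. pose proof Q7. pose proof iD_pos. nra. Qed.

Lemma c_small : u < 1/2 -> c <= 2.
Proof. intros. nra. Qed.

Lemma c_big : 1/2 <= u -> c * iD <= 10.
Proof.
  intros. pose proof iD_pos. pose proof Di.
  assert (c * c >= 5/4) by nra.
  assert (c >= 10/9) by nra.
  assert (c <= 10 * Dv) by (unfold Dv; nra). nra.
Qed.

Lemma wA w : 0 <= w -> w <= u -> w * ((1 - k ^ 4) * s * iD ^ 2) <= 4 * (u + 2).
Proof.
  intros Hw Hwu. pose proof iD_pos. pose proof Q7. pose proof Q1. pose proof k4. pose proof k4p.
  apply Rle_trans with (u * ((1 - k ^ 4) * s * iD ^ 2)).
  { apply Rmult_le_compat_r; auto. apply Rmult_le_pos. apply Rmult_le_pos; lra. nra. }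
  replace (u * ((1 - k ^ 4) * s * iD ^ 2)) with ((u * s * iD) * ((1 - k ^ 4) * iD)) by ring.
  apply Rle_trans with ((u + 2) * (4 * ((1 - k) * iD))).
  assert (0 <= u * s * iD) by (apply Rmult_le_pos; [apply Rmult_le_pos|]; lra).
  assert (0 <= (1 - k ^ 4) * iD) by (apply Rmult_le_pos; lra).
  assert ((1 - k ^ 4) * iD <= 4 * ((1 - k) * iD)) by (rewrite <- Rmult_assoc; apply Rmult_le_compat_r; lra).
  apply Rmult_le_compat; try lra.
  assert (4 * ((1-k)*iD) <= 4) by lra.
  apply Rle_trans with ((u+2)*4); [apply Rmult_le_compat_l; lra | lra].
Qed.

Lemma wB w : 0 <= w -> w <= 1 -> w <= u -> w * (2 * k * (s + u * c) * iD) <= 20 * (1 + u).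
Proof.
  intros Hw Hw1 Hwu. pose proof iD_pos. pose proof Q7. pose proof u2_le.
  assert (HB : 0 <= 2 * k * (s + u * c) * iD) by (apply Rmult_le_pos; [|lra]; nra).
  destruct (Rlt_le_dec u (1/2)) as [Hu|Hu].
  - pose proof (c_small Hu).
    apply Rle_trans with (u * (2 * k * (s + u * c) * iD)). apply Rmult_le_compat_r; auto.
    assert (u * u * c * iD <= 2 * (u + 2)).
    { replace (u * u * c * iD) with ((u * u * iD) * c) by ring.
      apply Rle_trans with ((u + 2) * 2). apply Rmult_le_compat; nra. lra. }
    assert (u * (2 * k * (s + u * c) * iD) <= 2 * (u * s * iD) + 2 * (u * u * c * iD)).
    { replace (u * (2 * k * (s + u * c) * iD)) with (k * (2 * (u * s * iD) + 2 * (u * u * c * iD))) by ring.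
      assert (0 <= 2 * (u * s * iD) + 2 * (u * u * c * iD)).
      { apply Rplus_le_le_0_compat; apply Rmult_le_pos; try lra; apply Rmult_le_pos; try lra; nra. }
      nra. }
    lra.
  - pose proof (c_big Hu).
    apply Rle_trans with (1 * (2 * k * (s + u * c) * iD)). apply Rmult_le_compat_r; auto.
    assert (2 * k * (s + u * c) * iD <= 2 * (1 + u) * (c * iD)).
    { assert (s * iD <= c * iD) by (apply Rmult_le_compat_r; lra).
      assert (0 <= (s + u * c) * iD) by nra.
      nra. }
    nra.
Qed.

Lemma wC w : 0 <= w -> w <= 1 -> w <= u -> w * (2 * k * u * s ^ 2 * iD ^ 2) <= 200 * (1 + u).
Proof.
  intros Hw Hw1 Hwu. pose proof iD_pos. pose proof Q7.
  assert (HC : 0 <= 2 * k * u * s ^ 2 * iD ^ 2) by (apply Rmult_le_pos; [|nra]; apply Rmult_le_pos; nra).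
  destruct (Rlt_le_dec u (1/2)) as [Hu|Hu].
  - apply Rle_trans with (u * (2 * k * u * s ^ 2 * iD ^ 2)). apply Rmult_le_compat_r; auto.
    replace (u * (2 * k * u * s ^ 2 * iD ^ 2)) with (2 * k * (u * s * iD) ^ 2) by ring.
    assert (0 <= u * s * iD) by (apply Rmult_le_pos; nra).
    assert ((u * s * iD) ^ 2 <= (u + 2) ^ 2) by (apply pow_incr; lra).
    nra.
  - pose proof (c_big Hu).
    apply Rle_trans with (1 * (2 * k * u * s ^ 2 * iD ^ 2)). apply Rmult_le_compat_r; auto.
    assert (0 <= s * iD) by nra.
    assert (s * iD <= 10) by nra.
    assert ((s * iD) ^ 2 <= 100) by nra.
    replace (1 * (2 * k * u * s ^ 2 * iD ^ 2)) with ((2 * u) * (k * (s * iD) ^ 2)) by ring.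
    assert (0 <= (s * iD) ^ 2) by apply pow2_ge_0.
    assert (k * (s * iD) ^ 2 <= 100) by nra.
    apply Rle_trans with ((2 * u) * 100). apply Rmult_le_compat_l; lra. lra.
Qed.

Lemma Wlem w : 0 <= w -> w <= 1 -> w <= u -> w * Rabs (Bug k u c s) <= 228 * (1 + u).
Proof.
  intros Hw Hw1 Hwu. rewrite Bug_eq.
  pose proof iD_pos. pose proof k4p.
  assert (HA : 0 <= (1 - k ^ 4) * s * iD ^ 2) by (apply Rmult_le_pos; [|nra]; nra).
  assert (HB : 0 <= 2 * k * (s + u * c) * iD) by (apply Rmult_le_pos; [|lra]; nra).
  assert (HC : 0 <= 2 * k * u * s ^ 2 * iD ^ 2) by (apply Rmult_le_pos; [|nra]; apply Rmult_le_pos; nra).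
  set (A := (1 - k ^ 4) * s * iD ^ 2) in *.
  set (B := 2 * k * (s + u * c) * iD) in *.
  set (C := 2 * k * u * s ^ 2 * iD ^ 2) in *.
  assert (Rabs (A - B + C) <= A + B + C) by (apply abs_le; lra).
  pose proof (wA w Hw Hwu). pose proof (wB w Hw Hw1 Hwu). pose proof (wC w Hw Hw1 Hwu).
  fold A in H2. fold B in H3. fold C in H4.
  apply Rle_trans with (w * (A + B + C)). apply Rmult_le_compat_l; auto.
  nra.
Qed.

Lemma Bklem : k * (1 - k ^ 2) * Rabs (Bkg k u c s) <= 38 * (1 + u).
Proof.
  rewrite Bkg_eq. pose proof iD_pos. pose proof k4p. pose proof Q7. pose proof Q1. pose proof k4.
  set (T := 3 + 3 * k ^ 2 + 4 * k ^ 3 * iD + (1 - k ^ 4) * iD ^ 2 + 2 * u * s * iD + 2 * k * u * s * iD ^ 2).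
  assert (Hk3 : 0 <= k ^ 3) by (apply pow_le; lra).
  assert (HusiD : 0 <= u * s * iD) by (apply Rmult_le_pos; nra).
  assert (Rabs (3 + 3 * k ^ 2 + 4 * k ^ 3 * iD - (1 - k ^ 4) * iD ^ 2 - 2 * u * s * iD - 2 * k * u * s * iD ^ 2) <= T).
  { unfold T. apply abs_le. split; [|nra].
    assert (0 <= (1 - k ^ 4) * iD ^ 2) by nra.
    assert (0 <= k * u * s * iD ^ 2) by (apply Rmult_le_pos; [|nra]; nra).
    nra. }
  assert (0 <= k * (1 - k ^ 2)) by nra.
  apply Rle_trans with (k * (1 - k ^ 2) * T). apply Rmult_le_compat_l; auto.
  assert (E1 : k * (1 - k ^ 2) * (3 + 3 * k ^ 2) <= 6) by nra.
  assert (E2 : k * (1 - k ^ 2) * (4 * k ^ 3 * iD) <= 8).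
  { replace (k * (1 - k ^ 2) * (4 * k ^ 3 * iD)) with (4 * (k ^ 4 * (1 + k)) * ((1 - k) * iD)) by ring.
    assert (k ^ 4 * (1 + k) <= 2) by nra. assert (0 <= (1 - k) * iD) by nra. nra. }
  assert (E3 : k * (1 - k ^ 2) * ((1 - k ^ 4) * iD ^ 2) <= 8).
  { replace (k * (1 - k ^ 2) * ((1 - k ^ 4) * iD ^ 2)) with ((k * (1 + k) * (1 + k) * (1 + k ^ 2)) * ((1 - k) * iD) ^ 2) by ring.
    assert (k * (1 + k) * (1 + k) * (1 + k ^ 2) <= 8) by nra.
    assert (0 <= (1 - k) * iD) by nra. assert (((1 - k) * iD) ^ 2 <= 1) by nra. nra. }
  assert (E4 : k * (1 - k ^ 2) * (2 * u * s * iD) <= 4 * (u + 2)).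
  { replace (k * (1 - k ^ 2) * (2 * u * s * iD)) with (2 * (k * (1 + k) * (1 - k)) * (u * s * iD)) by ring.
    assert (0 <= k * (1 + k) * (1 - k) <= 2) by nra. nra. }
  assert (E5 : k * (1 - k ^ 2) * (2 * k * u * s * iD ^ 2) <= 4 * (u + 2)).
  { replace (k * (1 - k ^ 2) * (2 * k * u * s * iD ^ 2)) with (2 * (k * k * (1 + k)) * ((1 - k) * iD) * (u * s * iD)) by ring.
    assert (0 <= k * k * (1 + k) <= 2) by nra. assert (0 <= (1 - k) * iD) by nra.
    assert (0 <= ((1 - k) * iD) * (u * s * iD) <= u + 2) by (split; nra). nra. }
  unfold T. nra.
Qed.

Lemma Blem : Rabs (Bg k u c s) <= 2 * u + 12.
Proof.
  rewrite Bg_eq. pose proof iD_pos. pose proof k4p. pose proof Q7. pose proof Q1. pose proof k4.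
  assert (HusiD : 0 <= u * s * iD) by (apply Rmult_le_pos; nra).
  assert (0 <= (1 - k ^ 4) * iD <= 4) by (split; nra).
  assert (0 <= k * (u * s * iD) <= u + 2) by (split; nra).
  assert (0 <= k ^ 3 <= 1) by (split; [apply pow_le; lra|]; nra).
  apply abs_le. split; nra.
Qed.

Variables p a t : R.
Hypotheses (hp : 0 < p) (ha : 0 < a) (ht : 0 < t) (hpy1 : a * t <= 2 * p * y) (hpy2 : 2 * p * y <= 3 * a * t).

Let q := 2 * p / (a * t).
Lemma q_pos : 0 < q. Proof. unfold q. apply Rdiv_lt_0_compat; nra. Qed.
Lemma iD_q : iD <= q.
Proof.
  pose proof P2a. pose proof iD_pos. pose proof Di. unfold q.
  apply (Rmult_le_reg_r (a * t)). nra. unfold Rdiv. rewrite Rmult_assoc, Rinv_l by nra.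
  apply Rle_trans with (iD * (2 * p * Dv)). apply Rmult_le_compat_l; nra.
  replace (iD * (2 * p * Dv)) with (2 * p * (Dv * iD)) by ring. rewrite Di. lra.
Qed.
Lemma tq : t * q = 2 * p / a. Proof. unfold q. field. lra. Qed.

Lemma M1 : a * t <= 2 * (p * Dv). Proof. pose proof P2a. nra. Qed.

Lemma M2 : c + s <= 10 * (1 + y) -> p * Dv <= 15 * (p + a * t).
Proof. intros H. assert (Dv <= 10 * (1 + y)) by (unfold Dv; lra). nra. Qed.

Lemma sD : Rabs (s - Dv) <= 1.
Proof. unfold Dv. apply abs_le. lra. Qed.

Lemma M3 : Rabs (s / (c - k) - 1) <= 2 * (p / (a * t)).
Proof.
  pose proof iD_pos. pose proof iD_q. pose proof sD. pose proof Dv_pos.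
  replace (s / (c - k) - 1) with ((s - Dv) * iD) by (unfold iD, Dv in *; field; lra).
  rewrite Rabs_mult, (Rabs_right iD) by lra.
  apply Rle_trans with (1 * q). apply Rmult_le_compat; try lra. apply Rabs_pos.
  unfold q. lra.
Qed.

Lemma M4 : Rabs (t * (s / (c - k)) + p / a * Bg k u c s - t) <= p / a * (2 * u + 14).
Proof.
  pose proof iD_pos. pose proof iD_q. pose proof sD. pose proof Dv_pos. pose proof Blem.
  replace (t * (s / (c - k)) + p / a * Bg k u c s - t) with (t * ((s - Dv) * iD) + p / a * Bg k u c s)
    by (unfold iD, Dv in *; field; lra).
  eapply Rle_trans. apply Rabs_triang.
  rewrite !Rabs_mult, (Rabs_right iD), (Rabs_right t), (Rabs_right (p / a)) by (try apply Rle_ge, Rlt_le, Rdiv_lt_0_compat; lra).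
  assert (Rabs (s - Dv) * iD <= q) by (apply Rle_trans with (1 * iD); [apply Rmult_le_compat_r|]; lra).
  assert (t * (Rabs (s - Dv) * iD) <= 2 * p / a) by (rewrite <- tq; apply Rmult_le_compat_l; lra).
  assert (0 < p / a) by (apply Rdiv_lt_0_compat; lra).
  assert (p / a * Rabs (Bg k u c s) <= p / a * (2 * u + 12)) by (apply Rmult_le_compat_l; lra).
  replace (2 * p / a) with (p / a * 2) in * by (field; lra).
  nra.
Qed.

Lemma M5 : Rabs (Fttg k c p) <= 4 * (p / (a ^ 2 * t ^ 2)).
Proof.
  pose proof iD_pos. pose proof iD_q. pose proof Q8. pose proof Dv_pos.
  unfold Fttg. replace ((1 - k * c) / (p * (c - k) ^ 3)) with (((1 - k * c) * iD) * iD ^ 2 / p)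
    by (unfold iD, Dv in *; field; lra).
  unfold Rdiv at 1. rewrite !Rabs_mult.
  rewrite (Rabs_right (iD ^ 2)) by (apply Rle_ge, pow_le; lra).
  rewrite (Rabs_right (/ p)) by (apply Rle_ge, Rlt_le, Rinv_0_lt_compat; lra).
  rewrite (Rabs_right iD) by lra.
  assert (iD ^ 2 <= q ^ 2) by (apply pow_incr; lra).
  apply Rle_trans with (1 * q ^ 2 * / p).
  apply Rmult_le_compat_r. left; apply Rinv_0_lt_compat; lra.
  apply Rmult_le_compat; try lra. apply Rmult_le_pos; [apply Rabs_pos|lra]. apply pow_le; lra.
  unfold q. right. field. lra.
Qed.

Lemma e1 : Rabs ((1 - k * c) * iD) <= 1.
Proof. pose proof iD_pos. rewrite Rabs_mult, (Rabs_right iD) by lra. apply Q8. Qed.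

Lemma iDa : 2 * iD / a <= 4 * (p / (a ^ 2 * t)).
Proof.
  pose proof iD_q. unfold q in H.
  replace (4 * (p / (a ^ 2 * t))) with (2 * (2 * p / (a * t)) / a) by (field; lra).
  unfold Rdiv. apply Rmult_le_compat_r. left; apply Rinv_0_lt_compat; lra.
  unfold Rdiv in H. lra.
Qed.

Lemma M6 : Rabs (Ftag k u c s p y t a) <= 16 * (p / (a ^ 2 * t)).
Proof.
  pose proof iD_pos. pose proof iD_q. pose proof Dv_pos. pose proof e1. pose proof iDa.
  pose proof Q2. pose proof Q9. pose proof Q4. pose proof Q10. pose proof Q6.
  assert (Q6' : 0 <= s * (1 - k) * iD) by (apply Rmult_le_pos; [apply Rmult_le_pos|]; lra).
  unfold Ftag, ypg, kpg.
  replace ((1 - k * c) / (c - k) ^ 3 * (t / p + y / a * (1 + k ^ 2) + u * (- k * (1 - k ^ 2) / a)) +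
     s * (- k * (1 - k ^ 2) / a) / (c - k) ^ 2) with
    (((1 - k * c) * iD) * (iD ^ 2 * t / p) + ((1 - k * c) * iD) * ((y * iD) * iD * (1 + k ^ 2) / a)
     + - (((1 - k * c) * iD) * ((u * (1 - k) * iD) * iD * (k * (1 + k)) / a))
     + - ((s * (1 - k) * iD) * (iD * (k * (1 + k)) / a)))
    by (unfold iD, Dv, y in *; field; lra).
  assert (HkA : 0 <= 1 + k ^ 2 <= 2) by (pose proof (kpow 2); lra).
  assert (HkB : 0 <= k * (1 + k) <= 2) by nra.
  assert (A1 : Rabs (((1 - k * c) * iD) * (iD ^ 2 * t / p)) <= 4 * (p / (a ^ 2 * t))).
  { apply abs1_mul; auto. apply Rdiv_le_0_compat; [|lra]. apply Rmult_le_pos; [apply pow_le|]; lra.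
    assert (iD ^ 2 <= q ^ 2) by (apply pow_incr; lra).
    apply Rle_trans with (q ^ 2 * t / p). unfold Rdiv. apply Rmult_le_compat_r. left; apply Rinv_0_lt_compat; lra.
    apply Rmult_le_compat_r; lra. unfold q. right. field. lra. }
  assert (A2 : Rabs (((1 - k * c) * iD) * ((y * iD) * iD * (1 + k ^ 2) / a)) <= 4 * (p / (a ^ 2 * t))).
  { apply abs1_mul; auto. apply Rdiv_le_0_compat; [|lra]. apply Rmult_le_pos; [|lra]. apply Rmult_le_pos; lra.
    apply Rle_trans with (2 * iD / a); auto. unfold Rdiv. apply Rmult_le_compat_r. left; apply Rinv_0_lt_compat; lra.
    assert (0 <= (y * iD) * iD) by nra. assert ((y * iD) * iD <= iD) by nra. nra. }
  assert (A3 : Rabs (- (((1 - k * c) * iD) * ((u * (1 - k) * iD) * iD * (k * (1 + k)) / a))) <= 4 * (p / (a ^ 2 * t))).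
  { rewrite Rabs_Ropp. apply abs1_mul; auto. apply Rdiv_le_0_compat; [|lra]. apply Rmult_le_pos; [|lra]. apply Rmult_le_pos; lra.
    apply Rle_trans with (2 * iD / a); auto. unfold Rdiv. apply Rmult_le_compat_r. left; apply Rinv_0_lt_compat; lra.
    assert (0 <= (u * (1 - k) * iD) * iD) by nra. assert ((u * (1 - k) * iD) * iD <= iD) by nra. nra. }
  assert (A4 : Rabs (- ((s * (1 - k) * iD) * (iD * (k * (1 + k)) / a))) <= 4 * (p / (a ^ 2 * t))).
  { rewrite Rabs_Ropp. apply abs1_mul. rewrite Rabs_right; lra. apply Rdiv_le_0_compat; [|lra]. apply Rmult_le_pos; lra.
    apply Rle_trans with (2 * iD / a); auto. unfold Rdiv. apply Rmult_le_compat_r. left; apply Rinv_0_lt_compat; lra.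
    nra. }
  eapply Rle_trans. apply Rabs_triang. eapply Rle_trans. apply Rplus_le_compat_r. apply abs_tri3.
  lra.
Qed.

Lemma M7 : Rabs (Faag k u c s p y t a) <= 1500 * (p / a ^ 2) * (1 + u).
Proof.
  pose proof iD_pos. pose proof iD_q. pose proof Dv_pos. pose proof M6. pose proof Blem. pose proof Bklem.
  pose proof Q2. pose proof Q3. pose proof Q9. pose proof Q4. pose proof Q5. pose proof Q10.
  set (Z := p / a ^ 2).
  assert (HZ : 0 < Z) by (unfold Z; apply Rdiv_lt_0_compat; [lra|apply pow_lt; lra]).
  unfold Faag, ypg, kpg.
  replace (t * Ftag k u c s p y t a - p / a ^ 2 * (2 + k ^ 2) * Bg k u c s +
    p / a * (Bug k u c s * ((t / p + y / a * (1 + k ^ 2) + u * (- k * (1 - k ^ 2) / a)) / (c - k)) +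
     Bkg k u c s * (- k * (1 - k ^ 2) / a))) with
   (t * Ftag k u c s p y t a + - (Z * (2 + k ^ 2) * Bg k u c s) + Bug k u c s * (t * iD / a)
    + Z * ((y * iD) * Bug k u c s) * (1 + k ^ 2)
    + - (Z * ((u * (1 - k) * iD) * Bug k u c s) * (k * (1 + k)))
    + - (Z * (k * (1 - k ^ 2) * Bkg k u c s)))
   by (unfold Z, iD, Dv, y in *; field; repeat split; lra).
  set (W := 228 * (1 + u)).
  assert (W1 : (y * iD) * Rabs (Bug k u c s) <= W) by (apply Wlem; lra).
  assert (W2 : (u * (1 - k) * iD) * Rabs (Bug k u c s) <= W) by (apply Wlem; lra).
  assert (HkA : 0 <= 1 + k ^ 2 <= 2) by (pose proof (kpow 2); lra).
  assert (HkB : 0 <= k * (1 + k) <= 2) by nra.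
  assert (HB0 : 0 <= Rabs (Bug k u c s)) by apply Rabs_pos.
  assert (S1 : Rabs (t * Ftag k u c s p y t a) <= 16 * Z).
  { rewrite Rabs_mult, (Rabs_right t) by lra.
    apply Rle_trans with (t * (16 * (p / (a ^ 2 * t)))). apply Rmult_le_compat_l; lra.
    unfold Z. right. field. lra. }
  assert (S2 : Rabs (- (Z * (2 + k ^ 2) * Bg k u c s)) <= 3 * Z * (2 * u + 12)).
  { rewrite Rabs_Ropp, !Rabs_mult, (Rabs_right Z), (Rabs_right (2 + k ^ 2)) by (pose proof (kpow 2); lra).
    pose proof (kpow 2). apply Rle_trans with (Z * 3 * (2 * u + 12)).
    apply Rmult_le_compat; try lra. apply Rmult_le_pos; lra. apply Rabs_pos. apply Rmult_le_compat_l; lra. lra. }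
  assert (S3 : Rabs (Bug k u c s * (t * iD / a)) <= 2 * Z * W).
  { rewrite Rabs_mult, (Rabs_right (t * iD / a)) by (apply Rle_ge, Rdiv_le_0_compat; nra).
    assert (t * iD / a <= 2 * Z * (y * iD)).
    { unfold Z. replace (2 * (p / a ^ 2) * (y * iD)) with ((2 * p * y / a) * iD / a) by (field; lra).
      unfold Rdiv. apply Rmult_le_compat_r. left; apply Rinv_0_lt_compat; lra.
      apply Rmult_le_compat_r. lra. apply (Rmult_le_reg_r a). lra. rewrite Rmult_assoc, Rinv_l by lra. lra. }
    apply Rle_trans with (Rabs (Bug k u c s) * (2 * Z * (y * iD))). apply Rmult_le_compat_l; auto.
    replace (Rabs (Bug k u c s) * (2 * Z * (y * iD))) with (2 * Z * ((y * iD) * Rabs (Bug k u c s))) by ring.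
    apply Rmult_le_compat_l; lra. }
  assert (S4 : Rabs (Z * ((y * iD) * Bug k u c s) * (1 + k ^ 2)) <= 2 * Z * W).
  { rewrite abs_form by lra.
    apply Rle_trans with (Z * 2 * W). apply Rmult_le_compat; try nra. lra. }
  assert (S5 : Rabs (- (Z * ((u * (1 - k) * iD) * Bug k u c s) * (k * (1 + k)))) <= 2 * Z * W).
  { rewrite Rabs_Ropp, abs_form by lra.
    apply Rle_trans with (Z * 2 * W). apply Rmult_le_compat; try nra. lra. }
  assert (S6 : Rabs (- (Z * (k * (1 - k ^ 2) * Bkg k u c s))) <= Z * (38 * (1 + u))).
  { rewrite Rabs_Ropp, Rabs_mult, (Rabs_right Z) by lra.
    rewrite Rabs_mult, (Rabs_right (k * (1 - k ^ 2))) by (apply Rle_ge; pose proof (kpow 2); nra).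
    apply Rmult_le_compat_l; lra. }
  set (T1 := t * Ftag k u c s p y t a) in *.
  set (T2 := - (Z * (2 + k ^ 2) * Bg k u c s)) in *.
  set (T3 := Bug k u c s * (t * iD / a)) in *.
  set (T4 := Z * (y * iD * Bug k u c s) * (1 + k ^ 2)) in *.
  set (T5 := - (Z * (u * (1 - k) * iD * Bug k u c s) * (k * (1 + k)))) in *.
  set (T6 := - (Z * (k * (1 - k ^ 2) * Bkg k u c s))) in *.
  assert (Rabs (T1 + T2 + T3 + T4 + T5 + T6) <= Rabs T1 + Rabs T2 + Rabs T3 + Rabs T4 + Rabs T5 + Rabs T6).
  { repeat (eapply Rle_trans; [apply Rabs_triang|apply Rplus_le_compat_r]). lra. }
  unfold W in *. nra.
Qed.

End G.


Lemma hyp_cs u : cosh u * cosh u - sinh u * sinh u = 1.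
Proof. pose proof (cosh_sinh u). simpl in H. lra. Qed.

Lemma hyp_cms u : cosh u - sinh u = / exp u.
Proof. unfold cosh, sinh. rewrite expN. field. pose proof (exp_pos u). lra. Qed.

Lemma hyp_cps u : cosh u + sinh u = exp u.
Proof. unfold cosh, sinh. field. Qed.

Lemma hyp_cs0 u : 0 < cosh u - sinh u.
Proof. rewrite hyp_cms. apply Rinv_0_lt_compat, exp_pos. Qed.

Lemma hyp_cs1 u : 0 <= u -> cosh u - sinh u <= 1.
Proof.
  intros. rewrite hyp_cms. pose proof (exp_ineq1_le u). pose proof (exp_pos u).
  rewrite <- Rinv_1. apply Rinv_le_contravar; lra.
Qed.

Lemma hyp_cs2 u : 1 - u <= cosh u - sinh u.
Proof. rewrite hyp_cms, <- expN. pose proof (exp_ineq1_le (- u)). lra. Qed.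

Lemma hyp_tanh u : 0 <= u -> sinh u <= u * cosh u.
Proof.
  intros Hu. destruct (Req_dec u 0) as [->|Hne]. rewrite sinh_0. lra.
  destruct (MVT_gen (fun v => v * cosh v - sinh v) 0 u (fun v => v * sinh v)) as [xi [Hxi E]].
  - intros x _. unfold cosh, sinh. auto_derive; auto. change R_AbsRing with R. field.
  - intros x _. apply continuity_pt_minus. apply continuity_pt_mult.
    apply derivable_continuous_pt, derivable_pt_id.
    apply derivable_continuous_pt, derivable_pt_cosh.
    apply derivable_continuous_pt, derivable_pt_sinh.
  - rewrite Rmin_left, Rmax_right in Hxi by lra.
    rewrite sinh_0, Rmult_0_l in E.
    pose proof (sinh_nonneg xi (proj1 Hxi)).
    assert (0 <= xi * sinh xi * (u - 0)) by (apply Rmult_le_pos; [apply Rmult_le_pos|]; lra).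
    lra.
Qed.

Lemma hyp_h5 u : 0 <= u -> u * sinh u <= (u + 2) * (cosh u - 1).
Proof.
  intros Hu. unfold cosh, sinh. rewrite expN. pose proof (exp_pos u). pose proof (exp_ineq1_le u).
  set (E := exp u) in *.
  replace (u * ((E - / E) / 2)) with ((u * (E * E - 1)) / (2 * E)) by (field; lra).
  replace ((u + 2) * ((E + / E) / 2 - 1)) with (((u + 2) * (E - 1) * (E - 1)) / (2 * E)) by (field; lra).
  unfold Rdiv. apply Rmult_le_compat_r. left; apply Rinv_0_lt_compat; lra.
  assert (0 <= (E - 1) * (E - 1 - u)) by (apply Rmult_le_pos; lra). nra.
Qed.

Lemma hyp_E u k : 0 <= u -> 0 <= k -> k <= 1 -> cosh u + sinh u <= 10 * (1 + (sinh u - k * u)).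
Proof.
  intros Hu Hk0 Hk1.
  assert (HF : exp u = exp (u / 2) * exp (u / 2)) by (rewrite <- exp_plus; f_equal; field).
  pose proof (exp_ineq1_le (u / 2)). pose proof (exp_pos (u / 2)).
  set (F := exp (u / 2)) in *.
  assert (sinh u = (F * F - / (F * F)) / 2).
  { unfold sinh. rewrite expN, HF. reflexivity. }
  rewrite hyp_cps, HF, H1.
  assert (k * u <= u) by nra.
  assert (u <= 2 * F - 2) by lra.
  assert (HF1 : 1 <= F) by lra.
  assert (F * F <= 10 * (1 + ((F * F - / (F * F)) / 2 - (2 * F - 2)))); [|lra].
  apply (Rmult_le_reg_r (F * F)). nra.
  replace (10 * (1 + ((F * F - / (F * F)) / 2 - (2 * F - 2))) * (F * F)) with
    (10 * F * F + 5 * F ^ 4 - 5 - 20 * F ^ 3 + 20 * F * F) by (field; lra).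
  assert (0 <= F * F * ((F - 5/2) ^ 2)) by (apply Rmult_le_pos; [nra|apply pow2_ge_0]).
  nra.
Qed.


Lemma ln_le_xm1 x : 0 < x -> ln x <= x - 1.
Proof. intros. pose proof (exp_ineq1_le (ln x)). rewrite exp_ln in H0; lra. Qed.

Lemma ln_ge_1mx x : 0 < x -> 1 - / x <= ln x.
Proof.
  intros. pose proof (ln_le_xm1 (/ x) (Rinv_0_lt_compat _ H)). rewrite ln_Rinv in H0 by lra. lra.
Qed.

Lemma jb_ge1 x : 4/3 <= jb x.
Proof.
  unfold jb. assert (sqrt (16/9) = 4/3).
  { replace (16/9) with ((4/3)^2) by field. apply sqrt_pow2. lra. }
  rewrite <- H. apply sqrt_le_1_alt. pose proof (pow2_ge_0 x). lra.
Qed.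

Lemma jb_ge x : 0 <= x -> x <= jb x.
Proof.
  intros. unfold jb. rewrite <- (sqrt_pow2 x) at 1 by auto. apply sqrt_le_1_alt. lra.
Qed.

Lemma ln_jb t : 2 * ln (jb t) = ln (2 + t ^ 2).
Proof.
  unfold jb. pose proof (pow2_ge_0 t).
  assert (0 < sqrt (2 + t ^ 2)) by (apply sqrt_lt_R0; lra).
  rewrite <- (sqrt_sqrt (2 + t ^ 2)) at 2 by lra. rewrite ln_mult by lra. ring.
Qed.

Lemma L_pos t : 1/4 <= ln (jb t).
Proof.
  pose proof (jb_ge1 t). pose proof (ln_ge_1mx (jb t) ltac:(lra)).
  assert (/ jb t <= 3/4). { replace (3/4) with (/ (4/3)) by field. apply Rinv_le_contravar; lra. }
  lra.
Qed.

Lemma Llem r t u y : 0 < r -> 0 < t -> 0 < y -> 0 <= u -> exp u <= 10 * (1 + y) -> 2 * r * y <= 3 * t ->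
  r * (1 + u) <= 50 * (jb r * ln (jb t)).
Proof.
  intros hr ht hy hu hE hry.
  assert (H1 : u <= ln (10 * (1 + y))). { rewrite <- (ln_exp u) at 1. apply ln_le. apply exp_pos. auto. }
  assert (H2 : 1 + y <= (1 + 3/2 * t) * (1 + / r)).
  { assert (y <= 3/2 * t * / r). { apply (Rmult_le_reg_r r). lra. rewrite Rmult_assoc, Rinv_l; lra. }
    assert (0 < / r) by (apply Rinv_0_lt_compat; lra). nra. }
  assert (H3 : ln (10 * (1 + y)) <= ln 10 + ln (1 + 3/2 * t) + ln (1 + / r)).
  { assert (0 < / r) by (apply Rinv_0_lt_compat; lra).
    rewrite <- ln_mult, <- ln_mult by nra. apply ln_le. lra. nra. }
  assert (H4 : ln 10 <= 9) by (pose proof (ln_le_xm1 10); lra).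
  assert (H5 : ln (1 + 3/2 * t) <= 2 * ln (jb t)).
  { rewrite ln_jb. apply ln_le. lra. pose proof (pow2_ge_0 (t - 3/4)). nra. }
  assert (H6 : r * ln (1 + / r) <= 1).
  { assert (0 < / r) by (apply Rinv_0_lt_compat; lra).
    pose proof (ln_le_xm1 (1 + / r) ltac:(lra)).
    apply Rle_trans with (r * (/ r)). apply Rmult_le_compat_l; lra. rewrite Rinv_r; lra. }
  pose proof (L_pos t). pose proof (jb_ge r (Rlt_le _ _ hr)). pose proof (jb_ge1 r).
  set (L := ln (jb t)) in *. set (J := jb r) in *.
  assert (r * (1 + u) <= 10 * r + 2 * r * L + 1) by nra.
  nra.
Qed.


Section F.
Variables (m t l : R).
Hypotheses (hm : 0 < m) (hl : 0 < l) (ht : 0 < t).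

Lemma Rt_Rg th a : 0 < a -> 0 < th + a * t -> Rt m t th a l = Rg m t l th a.
Proof.
  intros ha hs. pose proof (K_bounds m l hm hl a ha). pose proof (Ys_pos m t l hm hl th a ha hs).
  unfold Rt, RR, Rg, Ug. rewrite Rabs_right by lra.
  change (kappa m a l) with (Kf m l a). change (pp m a l) with (Pf m l a).
  change ((th + a * t) / Pf m l a) with (Ys m t l th a).
  rewrite H_eq by lra. ring.
Qed.

Lemma loc_th th a : 0 < th + a * t -> locally th (fun x => 0 < x + a * t).
Proof.
  intros hs. exists (mkposreal _ hs). intros x Hx. change (Rabs (x - th) < th + a * t) in Hx.
  apply Rabs_def2 in Hx. lra.
Qed.

Lemma loc_a th a : 0 < a -> 0 < th + a * t -> locally a (fun x => 0 < x /\ 0 < th + x * t).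
Proof.
  intros ha hs. assert (H : 0 < Rmin a ((th + a * t) / t)).
  { apply Rmin_pos; auto. apply Rdiv_lt_0_compat; auto. }
  exists (mkposreal _ H). intros x Hx. change (Rabs (x - a) < Rmin a ((th + a * t) / t)) in Hx.
  apply Rabs_def2 in Hx. pose proof (Rmin_l a ((th + a * t) / t)). pose proof (Rmin_r a ((th + a * t) / t)).
  split. lra.
  assert (a - x < (th + a * t) / t) by lra.
  assert ((a - x) * t < th + a * t). { apply (Rmult_lt_compat_r t) in H2; auto. unfold Rdiv in H2.
    rewrite Rmult_assoc, Rinv_l in H2; lra. }
  nra.
Qed.

Lemma DRth th a : 0 < a -> 0 < th + a * t -> Derive (fun x => Rt m t x a l) th = F1 m t l th a.
Proof.
  intros ha hs. apply is_derive_unique.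
  apply (is_derive_ext_loc (fun x => Rg m t l x a)).
  - eapply filter_imp; [|exact (loc_th th a hs)]. intros x Hx. symmetry. apply Rt_Rg; auto.
  - apply dRth; auto.
Qed.

Lemma DRa th a : 0 < a -> 0 < th + a * t -> Derive (fun x => Rt m t th x l) a = F2 m t l th a.
Proof.
  intros ha hs. apply is_derive_unique.
  apply (is_derive_ext_loc (fun x => Rg m t l th x)).
  - eapply filter_imp; [|exact (loc_a th a ha hs)]. intros x [Hx1 Hx2]. symmetry. apply Rt_Rg; auto.
  - apply dRa; auto.
Qed.

Lemma DDth th a : 0 < a -> 0 < th + a * t ->
  Derive (fun x => Derive (fun y => Rt m t y a l) x) th = Ftt (Kf m l a) (Ug m t l th a) (Pf m l a).
Proof.
  intros ha hs. rewrite (Derive_ext_loc _ (fun x => F1 m t l x a)).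
  - apply is_derive_unique. apply dF1th; auto.
  - eapply filter_imp; [|exact (loc_th th a hs)]. intros x Hx. apply DRth; auto.
Qed.

Lemma DDta th a : 0 < a -> 0 < th + a * t ->
  Derive (fun x => Derive (fun y => Rt m t y x l) th) a =
    Fta (Kf m l a) (Ug m t l th a) (Pf m l a) (Ys m t l th a) t a.
Proof.
  intros ha hs. rewrite (Derive_ext_loc _ (fun x => F1 m t l th x)).
  - apply is_derive_unique. apply dF1a; auto.
  - eapply filter_imp; [|exact (loc_a th a ha hs)]. intros x [Hx1 Hx2]. apply DRth; auto.
Qed.

Lemma DDaa th a : 0 < a -> 0 < th + a * t ->
  Derive (fun x => Derive (fun y => Rt m t th y l) x) a =
    Faa (Kf m l a) (Ug m t l th a) (Pf m l a) (Ys m t l th a) t a.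
Proof.
  intros ha hs. rewrite (Derive_ext_loc _ (fun x => F2 m t l th x)).
  - apply is_derive_unique. apply dF2a; auto.
  - eapply filter_imp; [|exact (loc_a th a ha hs)]. intros x [Hx1 Hx2]. apply DRa; auto.
Qed.

End F.


Theorem lemma2p18 (m : R) (hm : 0 < m) :
  exists C : R, 0 < C /\
  forall t th a l : R, 0 < t -> 0 < a -> 0 < l -> Rabs th <= a * t / 2 ->
    let p := pp m a l in
    a * t <= C * Rt m t th a l /\
    Rt m t th a l <= C * (p + a * t) /\
    Rabs (Derive (fun th' => Rt m t th' a l) th - 1) <= C * (p / (a * t)) /\
    Rabs (Derive (fun a' => Rt m t th a' l) a - t)
      <= C * (jb (p / a) * ln (jb t)) /\
    Rabs (Derive (fun th' => Derive (fun th'' => Rt m t th'' a l) th') th)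
      <= C * (p / (a ^ 2 * t ^ 2)) /\
    Rabs (Derive (fun a' => Derive (fun th' => Rt m t th' a' l) th) a)
      <= C * (p / (a ^ 2 * t)) /\
    Rabs (Derive (fun a' => Derive (fun a'' => Rt m t th a'' l) a') a)
      <= C * (/ a * jb (p / a) * ln (jb t)).
Proof.
  exists 75000. split; [lra|].
  intros t th a l ht ha hl hth p.
  assert (hth1 : th <= Rabs th) by apply RRle_abs.
  assert (hth2 : - th <= Rabs th) by (rewrite <- Rabs_Ropp; apply RRle_abs).
  assert (hs : 0 < th + a * t) by nra.
  unfold p. change (pp m a l) with (Pf m l a).
  rewrite Rt_Rg by auto.
  rewrite DRth, DRa by auto.
  rewrite DDth, DDta, DDaa by auto.
  pose proof (K_bounds m l hm hl a ha) as hk.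
  pose proof (P_pos m l hm hl a ha) as hP.
  assert (hY : 0 < Ys m t l th a) by (apply Ys_pos; auto).
  assert (hYe : Ys m t l th a = sinh (Ug m t l th a) - Kf m l a * Ug m t l th a) by (apply Ys_eq; auto).
  assert (hPY : Pf m l a * Ys m t l th a = th + a * t) by (unfold Ys; field; lra).
  assert (hu : 0 < Ug m t l th a) by (unfold Ug; apply U_pos; lra).
  unfold Rg, F2, F1. rewrite hYe in *.
  set (u := Ug m t l th a) in *. set (k := Kf m l a) in *. set (P := Pf m l a) in *.
  destruct hk as [hk0 hk1].
  pose proof (cosh_ge1 u) as hc1.
  pose proof (hyp_cs u) as hcs.
  pose proof (sinh_ge u (Rlt_le _ _ hu)) as hsu.
  pose proof (hyp_cs1 u (Rlt_le _ _ hu)) as hcs1.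
  pose proof (hyp_cs0 u) as hcs0.
  pose proof (hyp_cs2 u) as hcs2.
  pose proof (hyp_tanh u (Rlt_le _ _ hu)) as htanh.
  pose proof (hyp_h5 u (Rlt_le _ _ hu)) as h5.
  pose proof (hyp_E u k (Rlt_le _ _ hu) (Rlt_le _ _ hk0) (Rlt_le _ _ hk1)) as hE.
  pose proof (hyp_cps u) as hcps.
  set (c := cosh u) in *. set (s := sinh u) in *.
  assert (hpy1 : a * t <= 2 * P * (s - k * u)) by nra.
  assert (hpy2 : 2 * P * (s - k * u) <= 3 * a * t) by nra.
  assert (hy : 0 < s - k * u) by (rewrite <- hPY in hs; nra).
  assert (hr : 0 < P / a) by (apply Rdiv_lt_0_compat; lra).
  assert (hry : 2 * (P / a) * (s - k * u) <= 3 * t).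
  { unfold Rdiv. apply (Rmult_le_reg_r a); auto.
    replace (2 * (P * / a) * (s - k * u) * a) with (2 * P * (s - k * u)) by (field; lra). lra. }
  assert (hL : P / a * (1 + u) <= 50 * (jb (P / a) * ln (jb t))).
  { apply (Llem (P / a) t u (s - k * u)); auto; lra. }
  pose proof (L_pos t) as hLp. pose proof (jb_ge1 (P / a)) as hJ.
  assert (hJL : 0 < jb (P / a) * ln (jb t)) by nra.
  assert (hD : 0 < c - k) by lra.
  split; [|split; [|split; [|split; [|split; [|split]]]]].
  - pose proof (M1 k u c s hk0 hk1 hcs1 hcs0 hcs2 P a t hP hpy1). nra.
  - pose proof (M2 k u c s hk0 hu hsu P a t hP hpy2 hE). nra.
  - pose proof (M3 k u c s hk0 hk1 hc1 hsu hcs1 hcs0 hcs2 P a t hP ha ht hpy1).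
    assert (0 < P / (a * t)) by (apply Rdiv_lt_0_compat; nra). lra.
  - pose proof (M4 k u c s hk0 hk1 hu hc1 hcs hsu hcs1 hcs0 hcs2 h5 P a t hP ha ht hpy1).
    change (Bf k u) with (Bg k u c s).
    assert (P / a * (2 * u + 14) <= 14 * (P / a * (1 + u))) by nra. nra.
  - pose proof (M5 k u c s hk0 hk1 hc1 hcs hsu hcs0 hcs2 P a t hP ha ht hpy1).
    change (Ftt k u P) with (Fttg k c P).
    assert (0 < P / (a ^ 2 * t ^ 2)) by (apply Rdiv_lt_0_compat; [lra|]; apply Rmult_lt_0_compat; apply pow_lt; lra). lra.
  - pose proof (M6 k u c s hk0 hk1 hu hc1 hcs hsu hcs1 hcs0 hcs2 P a t hP ha ht hpy1).
    change (Fta k u P (s - k * u) t a) with (Ftag k u c s P (s - k * u) t a).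
    assert (0 < P / (a ^ 2 * t)) by (apply Rdiv_lt_0_compat; [lra|]; apply Rmult_lt_0_compat; [apply pow_lt|]; lra). lra.
  - pose proof (M7 k u c s hk0 hk1 hu hc1 hcs hsu hcs1 hcs0 hcs2 htanh h5 P a t hP ha ht hpy1).
    change (Faa k u P (s - k * u) t a) with (Faag k u c s P (s - k * u) t a).
    assert (E1 : 1500 * (P / a ^ 2) * (1 + u) = 1500 * / a * (P / a * (1 + u))) by (field; lra).
    assert (0 < / a) by (apply Rinv_0_lt_compat; lra).
    assert (1500 * / a * (P / a * (1 + u)) <= 1500 * / a * (50 * (jb (P / a) * ln (jb t)))) by
      (apply Rmult_le_compat_l; [lra|auto]).
    replace (75000 * (/ a * jb (P / a) * ln (jb t))) with (1500 * / a * (50 * (jb (P / a) * ln (jb t)))) by ring.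
    lra.
Qed.
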